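(* Let $\theta$ be an irrational number whose best rational approximants $(p_n/q_n)_{n\ge0}$ satisfy $q_n^{-1}\log q_{n+1}\to\infty$ as $n\to\infty$. For any sequence of positive numbers $(\varepsilon_p)_{p\ge1}$ converging to $0$, there exist a subsequence $(q'_n)_{n\ge0}$ of $(q_n)_{n\ge0}$ and a strictly increasing sequence of positive integers $(N_p)_{p\ge1}$ such that for every $p\ge1$, \[|1-e^{2\pi i N_p\theta}|+\sum_{n\ge0}|1-e^{2\pi i q'_nN_p\theta}|\,p^{q'_n}\le\varepsilon_p.\]
   Context: Best rational approximants $p_n/q_n$ of an irrational $\theta$ are its continued fraction convergents, with $\gcd(p_n,q_n)=1$, $q_n\ge0$. A subsequence $q'$ of $(q_n)$ means $q'_n=q_{k_n}$ with $k_n$ strictly increasing. *)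

(* Defs.v *)
From Stdlib Require Import Reals ZArith Arith.
Open Scope R_scope.

Definition irrational (t : R) : Prop :=
  ~ exists (a b : Z), b <> 0%Z /\ t = IZR a / IZR b.

Fixpoint cf_rem (t : R) (n : nat) : R :=
  match n with
  | O => t - IZR (Int_part t)
  | S m => / cf_rem t m - IZR (Int_part (/ cf_rem t m))
  end.

(* partial quotient a_{n+1} = floor(1/x_n) *)
Definition cf_a (t : R) (n : nat) : nat :=
  Z.to_nat (Int_part (/ cf_rem t n)).

(* (q_{n-1}, q_n), with q_{-1} = 0, q_0 = 1, q_{n+1} = a_{n+1} q_n + q_{n-1} *)
Fixpoint cf_qpair (t : R) (n : nat) : nat * nat :=
  match n with
  | O => (0%nat, 1%nat)
  | S m => let (qa, qb) := cf_qpair t m in (qb, (cf_a t m * qb + qa)%nat)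
  end.

Definition cf_q (t : R) (n : nat) : nat := snd (cf_qpair t n).

(* |1 - e^{2 pi i x}| written out *)
Definition abs1e (x : R) : R :=
  sqrt ((1 - cos (2 * PI * x)) ^ 2 + (sin (2 * PI * x)) ^ 2).

(* Main.v *)
Require Import Defs.
From Stdlib Require Import Reals ZArith Arith Lra Lia ClassicalEpsilon.
Open Scope R_scope.

Lemma sin_lb y : 0 <= y -> - y <= sin y.
Proof.
  intro H. destruct (Rle_lt_dec y 1).
  - pose proof PI2_3_2. assert (0 <= sin y) by (apply sin_ge_0; lra). lra.
  - pose proof (SIN_bound y). lra.
Qed.

Lemma sin_abs_le x : Rabs (sin x) <= Rabs x.
Proof.
  destruct (Rle_lt_dec 0 x) as [H|H].
  - pose proof (sin_lb x H).
    assert (sin x <= x).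
    { destruct (Req_dec x 0). subst. rewrite sin_0; lra. left; apply sin_lt_x; lra. }
    unfold Rabs; repeat destruct Rcase_abs; lra.
  - pose proof (sin_lb (-x)). rewrite sin_neg in H0.
    pose proof (sin_gt_x x H).
    unfold Rabs; repeat destruct Rcase_abs; lra.
Qed.

Lemma abs1e_eq x : abs1e x = sqrt (4 * (sin (PI * x))²).
Proof.
  unfold abs1e. f_equal.
  replace (2 * PI * x) with (2 * (PI * x)) by ring.
  rewrite cos_2a_sin, sin_2a. pose proof (sin2_cos2 (PI*x)). unfold Rsqr in *. nra.
Qed.

Lemma abs1e_le x (z : Z) : abs1e x <= 2 * PI * Rabs (x - IZR z).
Proof.
  rewrite abs1e_eq.
  replace (PI * x) with (PI * (x - IZR z) + IZR z * PI) by ring.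
  rewrite sin_plus.
  rewrite (sin_eq_0_1 (IZR z * PI)) by (exists z; reflexivity).
  pose proof (sin2_cos2 (IZR z * PI)).
  rewrite (sin_eq_0_1 (IZR z * PI)) in H by (exists z; reflexivity).
  replace (4 * (sin (PI * (x - IZR z)) * cos (IZR z * PI) + cos (PI * (x - IZR z)) * 0)²)
    with ((2 * sin (PI * (x - IZR z)))²) by (unfold Rsqr in *; nra).
  rewrite sqrt_Rsqr_abs. rewrite Rabs_mult, Rabs_right by lra.
  pose proof (sin_abs_le (PI * (x - IZR z))). rewrite Rabs_mult in H0.
  rewrite (Rabs_right PI) in H0 by (pose proof PI_RGT_0; lra). lra.
Qed.

Lemma abs1e_ge0 x : 0 <= abs1e x.
Proof. unfold abs1e; apply sqrt_pos. Qed.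

Lemma frac_bounds y : 0 <= y - IZR (Int_part y) < 1.
Proof. pose proof (base_Int_part y). lra. Qed.

Lemma rem_bounds t n : 0 <= cf_rem t n < 1.
Proof. destruct n; simpl; apply frac_bounds. Qed.

Lemma cf_a_eq t n : 0 < cf_rem t n ->
  INR (cf_a t n) + cf_rem t (S n) = / cf_rem t n /\ (1 <= cf_a t n)%nat.
Proof.
  intro H. pose proof (rem_bounds t n).
  assert (Hi : 1 < / cf_rem t n).
  { rewrite <- Rinv_1. apply Rinv_lt_contravar; lra. }
  pose proof (base_Int_part (/ cf_rem t n)).
  assert (Hz : (1 <= Int_part (/ cf_rem t n))%Z).
  { assert (0 < IZR (Int_part (/ cf_rem t n))) by lra. apply lt_IZR in H2. lia. }
  unfold cf_a. simpl. split.
  - rewrite INR_IZR_INZ, Z2Nat.id by lia. ring.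
  - lia.
Qed.

Lemma qpair_S t n : cf_qpair t (S n) = (cf_q t n, (cf_a t n * cf_q t n + fst (cf_qpair t n))%nat).
Proof. unfold cf_q. simpl. destruct (cf_qpair t n); reflexivity. Qed.

Fixpoint E (t : R) (n : nat) : R :=
  match n with O => 1 | S m => E t m * cf_rem t m end.
Definition sg t n := - (-1) ^ n * E t n.

Lemma q_ge1 t n : (forall j, (j < n)%nat -> 0 < cf_rem t j) -> (1 <= cf_q t n)%nat.
Proof.
  induction n; intros H. - unfold cf_q; simpl; lia.
  - unfold cf_q at 1. rewrite qpair_S. simpl.
    destruct (cf_a_eq t n (H n ltac:(lia))) as [_ Ha].
    specialize (IHn (fun j Hj => H j ltac:(lia))). nia.
Qed.

Lemma inv t n : (forall j, (j < n)%nat -> 0 < cf_rem t j) ->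
  (exists z, INR (fst (cf_qpair t n)) * t - sg t n = IZR z) /\
  (exists z, INR (cf_q t n) * t - sg t (S n) = IZR z).
Proof.
  induction n; intros H.
  - split.
    + exists 1%Z. unfold sg; simpl. ring.
    + exists (Int_part t). unfold sg, cf_q; simpl. ring.
  - destruct (IHn (fun j Hj => H j ltac:(lia))) as [[z1 H1] [z2 H2]].
    split.
    + exists z2. rewrite qpair_S. simpl. exact H2.
    + destruct (cf_a_eq t n (H n ltac:(lia))) as [Ha _].
      exists (Z.of_nat (cf_a t n) * z2 + z1)%Z.
      unfold cf_q at 1. rewrite qpair_S. simpl snd.
      rewrite plus_IZR, mult_IZR, <- INR_IZR_INZ, <- H1, <- H2.
      rewrite plus_INR, mult_INR.
      assert (Hs : sg t (S (S n)) = INR (cf_a t n) * sg t (S n) + sg t n).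
      { assert (H0 : cf_rem t (S n) = / cf_rem t n - INR (cf_a t n)) by lra.
        unfold sg. change (E t (S (S n))) with (E t n * cf_rem t n * cf_rem t (S n)).
        change (E t (S n)) with (E t n * cf_rem t n). rewrite H0. simpl pow. specialize (H n ltac:(lia)). field. lra. }
      rewrite Hs. ring.
Qed.

Lemma rem_pos t (Hirr : irrational t) n : 0 < cf_rem t n.
Proof.
  induction n using (well_founded_induction lt_wf).
  destruct (rem_bounds t n) as [H0 _]. destruct H0 as [|H0]; auto. exfalso.
  destruct n.
  - apply Hirr. exists (Int_part t), 1%Z. split. lia. simpl in H0. field_simplify. lra.
  - destruct (inv t (S n) (fun j Hj => H j Hj)) as [_ [z Hz]].
    pose proof (q_ge1 t (S n) (fun j Hj => H j Hj)).
    assert (sg t (S (S n)) = 0). { unfold sg. change (E t (S (S n))) with (E t (S n) * cf_rem t (S n)). rewrite <- H0. ring. }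
    rewrite H2 in Hz. apply Hirr. exists z, (Z.of_nat (cf_q t (S n))). split. lia.
    rewrite <- INR_IZR_INZ. apply le_INR in H1. simpl in H1.
    rewrite <- Hz. field. lra.
Qed.

Lemma det t (Hirr : irrational t) n :
  INR (cf_q t n) * E t n + INR (fst (cf_qpair t n)) * E t (S n) = 1.
Proof.
  induction n.
  - unfold cf_q; simpl. ring.
  - unfold cf_q at 1. rewrite qpair_S. simpl fst. simpl snd.
    destruct (cf_a_eq t n (rem_pos t Hirr n)) as [Ha _].
    pose proof (rem_pos t Hirr n).
    rewrite <- IHn. rewrite plus_INR, mult_INR.
    assert (H0 : cf_rem t (S n) = / cf_rem t n - INR (cf_a t n)) by lra.
    change (E t (S (S n))) with (E t n * cf_rem t n * cf_rem t (S n)).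
    change (E t (S n)) with (E t n * cf_rem t n). rewrite H0. field. lra.
Qed.

Lemma E_pos t (Hirr : irrational t) n : 0 < E t n.
Proof. induction n; simpl. lra. pose proof (rem_pos t Hirr n). nra. Qed.

Lemma near t (Hirr : irrational t) n : exists z : Z,
  Rabs (INR (cf_q t n) * t - IZR z) <= / INR (cf_q t (S n)).
Proof.
  destruct (inv t n (fun j _ => rem_pos t Hirr j)) as [_ [z Hz]].
  exists z. rewrite <- Hz. replace (INR (cf_q t n) * t - (INR (cf_q t n) * t - sg t (S n))) with (sg t (S n)) by ring.
  unfold sg. rewrite Rabs_mult, Rabs_Ropp, pow_1_abs, Rmult_1_l.
  pose proof (E_pos t Hirr (S n)). pose proof (E_pos t Hirr (S (S n))).
  rewrite Rabs_right by lra.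
  pose proof (det t Hirr (S n)). rewrite qpair_S in H1. simpl fst in H1.
  pose proof (q_ge1 t (S n) (fun j _ => rem_pos t Hirr j)). apply le_INR in H2. simpl in H2.
  pose proof (pos_INR (cf_q t n)).
  apply (Rmult_le_reg_l (INR (cf_q t (S n)))). lra. rewrite Rinv_r by lra. nra.
Qed.

Lemma q_mono t (Hirr : irrational t) n : (cf_q t n <= cf_q t (S n))%nat.
Proof.
  unfold cf_q at 2. rewrite qpair_S. simpl.
  destruct (cf_a_eq t n (rem_pos t Hirr n)) as [_ Ha]. nia.
Qed.

Lemma q_strict t (Hirr : irrational t) n : (1 <= n)%nat -> (cf_q t n < cf_q t (S n))%nat.
Proof.
  intro H. unfold cf_q at 2. rewrite qpair_S. simpl.
  destruct (cf_a_eq t n (rem_pos t Hirr n)) as [_ Ha].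
  destruct n. lia. rewrite qpair_S. simpl.
  pose proof (q_ge1 t n (fun j _ => rem_pos t Hirr j)). nia.
Qed.

Lemma q_le t (Hirr : irrational t) m n : (m <= n)%nat -> (cf_q t m <= cf_q t n)%nat.
Proof.
  induction 1. lia. pose proof (q_mono t Hirr m0). lia.
Qed.

Lemma q_ge_n t (Hirr : irrational t) n : (n <= cf_q t n)%nat.
Proof.
  induction n. lia. destruct n. pose proof (q_ge1 t 1 (fun j _ => rem_pos t Hirr j)). lia.
  pose proof (q_strict t Hirr (S n) ltac:(lia)). lia.
Qed.

Lemma growth_cond t (Hirr : irrational t)
  (Hgrowth : cv_infty (fun n => ln (INR (cf_q t (S n))) / INR (cf_q t n)))
  C b : 0 < C -> 1 <= b -> exists M, forall k, (M <= k)%nat ->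
    C * b ^ (cf_q t k) <= INR (cf_q t (S k)).
Proof.
  intros HC Hb. destruct (Hgrowth (ln b + Rabs (ln C))) as [M HM].
  exists M. intros k Hk. specialize (HM k Hk). simpl in HM.
  pose proof (q_ge1 t k (fun j _ => rem_pos t Hirr j)) as Q1.
  pose proof (q_ge1 t (S k) (fun j _ => rem_pos t Hirr j)) as Q2.
  apply le_INR in Q1, Q2. simpl in Q1, Q2.
  left. apply ln_lt_inv.
  - apply Rmult_lt_0_compat. lra. apply pow_lt; lra.
  - lra.
  - rewrite ln_mult, ln_pow by (try apply pow_lt; lra).
    assert (0 <= ln b). { destruct Hb. left. rewrite <- ln_1. apply ln_increasing; lra. subst; rewrite ln_1; lra. }
    apply (Rmult_lt_compat_r (INR (cf_q t k))) in HM; [|lra].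
    unfold Rdiv in HM. rewrite Rmult_assoc, Rinv_l, Rmult_1_r in HM by lra.
    pose proof (Rle_abs (ln C)). pose proof (Rabs_pos (ln C)). nra.
Qed.

Lemma INR_le_pow2 n : INR n <= 2 ^ n.
Proof. induction n. simpl; lra. rewrite S_INR. simpl. pose proof (pow_R1_Rle 2 n). lra. Qed.

Lemma key (Q j : nat) a P p c qq : 0 < c -> 1 <= p -> 0 <= a <= INR Q -> 0 <= P <= p ^ Q ->
  2 ^ j <= 2 * 2 ^ Q -> (4 * PI / c) * (4 * p) ^ Q <= qq ->
  2 * PI * (a / qq) * P <= c * (/ 2) ^ j.
Proof.
  intros Hc Hp Ha HP Hj Hq.
  set (X := (4 * p) ^ Q) in *.
  assert (HX : X = 2 ^ Q * 2 ^ Q * p ^ Q).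
  { unfold X. rewrite <- !Rpow_mult_distr. f_equal. }
  pose proof (INR_le_pow2 Q). pose proof PI_RGT_0.
  assert (1 <= X) by (apply pow_R1_Rle; lra).
  assert (0 < 2 ^ j) by (apply pow_lt; lra).
  assert (0 < 2 ^ Q) by (apply pow_lt; lra).
  assert (Hprod : a * P * 2 ^ j <= 2 * X).
  { rewrite HX. apply Rle_trans with (INR Q * p ^ Q * (2 * 2 ^ Q)).
    apply Rmult_le_compat; [nra|lra| |lra]. apply Rmult_le_compat; lra.
    assert (INR Q * p ^ Q <= 2 ^ Q * p ^ Q). apply Rmult_le_compat_r; lra. nra. }
  assert (Hqq : 4 * PI * X <= c * qq).
  { apply (Rmult_le_compat_l c) in Hq; [|lra]. replace (c * (4 * PI / c * X)) with (4 * PI * X) in Hq by (field; lra). lra. }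
  assert (0 < qq). { assert (0 < 4 * PI / c * X). apply Rmult_lt_0_compat. apply Rdiv_lt_0_compat; lra. lra. lra. }
  rewrite pow_inv.
  apply (Rmult_le_reg_r (2 ^ j * qq)). nra.
  replace (c * / 2 ^ j * (2 ^ j * qq)) with (c * qq) by (field; lra).
  replace (2 * PI * (a / qq) * P * (2 ^ j * qq)) with (2 * PI * (a * P * 2 ^ j)) by (field; lra).
  nra.
Qed.

Lemma series_bound (f : nat -> R) c : (forall k, 0 <= f k <= c * (/2) ^ (S k)) ->
  exists l, infinite_sum f l /\ l <= c.
Proof.
  intros Hf.
  assert (Hg : forall n, sum_f_R0 (fun k => c * (/2) ^ (S k)) n = c * (1 - (/2) ^ (S n))).
  { induction n. simpl. field. change (sum_f_R0 (fun k => c * (/2) ^ (S k)) (S n)) with (sum_f_R0 (fun k => c * (/2) ^ (S k)) n + c * (/2) ^ (S (S n))). rewrite IHn. simpl. field. }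
  assert (Hc : 0 <= c). { destruct (Hf 0%nat). simpl in H0. lra. }
  assert (Hb : forall n, sum_f_R0 f n <= c).
  { intro n. apply Rle_trans with (sum_f_R0 (fun k => c * (/2) ^ (S k)) n).
    apply sum_Rle. intros; apply Hf. rewrite Hg.
    assert (0 < (/2) ^ (S n)) by (apply pow_lt; lra). nra. }
  destruct (growing_cv (sum_f_R0 f)) as [l Hl].
  - intro n. simpl. destruct (Hf (S n)). lra.
  - exists c. intros x [i ->]. apply Hb.
  - exists l. split. exact Hl.
    apply (@Rle_cv_lim (sum_f_R0 f) (fun _ => c)); auto.
    intros eps He. exists 0%nat. intros. unfold R_dist. rewrite Rminus_diag, Rabs_R0. lra.
Qed.

Theorem lemma2p5 (theta : R) (Hirr : irrational theta)
  (Hgrowth : cv_infty (fun n => ln (INR (cf_q theta (S n))) / INR (cf_q theta n)))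
  (eps : nat -> R)
  (Hpos : forall p : nat, (1 <= p)%nat -> 0 < eps p)
  (Hcv : Un_cv eps 0) :
  exists (k : nat -> nat) (N : nat -> nat),
    (forall n : nat, (k n < k (S n))%nat) /\
    (forall p : nat, (1 <= p)%nat -> (0 < N p)%nat) /\
    (forall p : nat, (1 <= p)%nat -> (N p < N (S p))%nat) /\
    (forall p : nat, (1 <= p)%nat ->
       exists l : R,
         infinite_sum
           (fun n => abs1e (INR (cf_q theta (k n)) * INR (N p) * theta)
                     * INR p ^ (cf_q theta (k n))) l /\
         abs1e (INR (N p) * theta) + l <= eps p).
Proof.
  set (cond := fun (p k : nat) => (4 * PI / (eps p / 2)) * (4 * INR p) ^ (cf_q theta k)
                 <= INR (cf_q theta (S k))).
  assert (HM : forall p, exists M, (1 <= p)%nat -> forall k, (M <= k)%nat -> cond p k).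
  { intro p. destruct (le_lt_dec 1 p) as [Hp|Hp].
    - destruct (growth_cond theta Hirr Hgrowth (4 * PI / (eps p / 2)) (4 * INR p)) as [M HM].
      + pose proof PI_RGT_0. pose proof (Hpos p Hp). apply Rdiv_lt_0_compat; lra.
      + apply le_INR in Hp. simpl in Hp. lra.
      + exists M. intros _. exact HM.
    - exists 0%nat. intros; lia. }
  set (Mf := fun p => proj1_sig (constructive_indefinite_description _ (HM p))).
  assert (HMf : forall p, (1 <= p)%nat -> forall k, (Mf p <= k)%nat -> cond p k).
  { intro p. unfold Mf. destruct (constructive_indefinite_description _ (HM p)). exact c. }
  set (m := fix m (p : nat) : nat := match p with O => O | S p' => Nat.max (Mf p) (S (m p')) end).
  assert (Hm1 : forall p, (m p < m (S p))%nat). { intro p. simpl. lia. }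
  assert (Hm2 : forall p, (1 <= p)%nat -> (Mf p <= m p)%nat /\ (1 <= m p)%nat).
  { intros [|p] Hp. lia. simpl. lia. }
  exists (fun n => n), (fun p => cf_q theta (m p)).
  split; [intro; lia|]. split; [|split].
  - intros p _. apply (q_ge1 theta (m p) (fun j _ => rem_pos theta Hirr j)).
  - intros p Hp. destruct (Hm2 p Hp) as [_ H1].
    pose proof (q_strict theta Hirr (m p) H1). pose proof (q_le theta Hirr (S (m p)) (m (S p)) (Hm1 p)). lia.
  - intros p Hp. destruct (Hm2 p Hp) as [HmM Hm1p].
    set (M := m p). fold M in HmM, Hm1p.
    pose proof (Hpos p Hp) as He. set (c := eps p / 2).
    assert (Hc : 0 < c) by (unfold c; lra).
    assert (Hp' : 1 <= INR p) by (apply le_INR in Hp; simpl in Hp; lra).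
    assert (Hcond : forall k, (M <= k)%nat -> (4 * PI / c) * (4 * INR p) ^ (cf_q theta k) <= INR (cf_q theta (S k))).
    { intros k Hk. apply (HMf p Hp). lia. }
    destruct (near theta Hirr M) as [zM HzM].
    assert (HqM : forall n, 0 < INR (cf_q theta n)).
    { intro n. pose proof (q_ge1 theta n (fun j _ => rem_pos theta Hirr j)). apply le_INR in H. simpl in H. lra. }
    destruct (series_bound (fun n => abs1e (INR (cf_q theta n) * INR (cf_q theta M) * theta)
                     * INR p ^ (cf_q theta n)) c) as [l [Hl Hlc]].
    + intro k. split.
      { apply Rmult_le_pos. apply abs1e_ge0. apply pow_le; lra. }
      assert (HP : 0 <= INR p ^ cf_q theta k) by (apply pow_le; lra).
      destruct (le_lt_dec k M) as [HkM|HkM].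
      * apply Rle_trans with (2 * PI * (INR (cf_q theta k) / INR (cf_q theta (S M))) * INR p ^ cf_q theta k).
        { apply Rmult_le_compat_r; auto.
          apply Rle_trans with (2 * PI * Rabs (INR (cf_q theta k) * INR (cf_q theta M) * theta - IZR (Z.of_nat (cf_q theta k) * zM))).
          apply abs1e_le. rewrite mult_IZR, <- INR_IZR_INZ.
          replace (INR (cf_q theta k) * INR (cf_q theta M) * theta - INR (cf_q theta k) * IZR zM)
            with (INR (cf_q theta k) * (INR (cf_q theta M) * theta - IZR zM)) by ring.
          rewrite Rabs_mult, Rabs_right by (pose proof (HqM k); lra).
          pose proof PI_RGT_0. pose proof (HqM k).
          unfold Rdiv. apply Rmult_le_compat_l. lra. apply Rmult_le_compat_l; lra. }
        apply (key (cf_q theta M) (S k) _ _ (INR p)); auto.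
        -- pose proof (q_le theta Hirr k M HkM). apply le_INR in H. pose proof (HqM k). lra.
        -- split; auto. apply Rle_pow; auto. apply q_le; auto.
        -- pose proof (q_ge_n theta Hirr M). simpl.
           apply Rmult_le_compat_l. lra. apply Rle_pow. lra. lia.
      * destruct (near theta Hirr k) as [zk Hzk].
        apply Rle_trans with (2 * PI * (INR (cf_q theta M) / INR (cf_q theta (S k))) * INR p ^ cf_q theta k).
        { apply Rmult_le_compat_r; auto.
          apply Rle_trans with (2 * PI * Rabs (INR (cf_q theta k) * INR (cf_q theta M) * theta - IZR (Z.of_nat (cf_q theta M) * zk))).
          apply abs1e_le. rewrite mult_IZR, <- INR_IZR_INZ.
          replace (INR (cf_q theta k) * INR (cf_q theta M) * theta - INR (cf_q theta M) * IZR zk)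
            with (INR (cf_q theta M) * (INR (cf_q theta k) * theta - IZR zk)) by ring.
          rewrite Rabs_mult, Rabs_right by (pose proof (HqM M); lra).
          pose proof PI_RGT_0. pose proof (HqM M).
          unfold Rdiv. apply Rmult_le_compat_l. lra. apply Rmult_le_compat_l; lra. }
        apply (key (cf_q theta k) (S k) _ _ (INR p)); auto.
        -- pose proof (q_le theta Hirr M k ltac:(lia)). apply le_INR in H. pose proof (HqM M). lra.
        -- split; auto. lra.
        -- pose proof (q_ge_n theta Hirr k). simpl.
           apply Rmult_le_compat_l. lra. apply Rle_pow. lra. lia.
        -- apply Hcond. lia.
    + exists l. split. exact Hl.
      assert (abs1e (INR (cf_q theta M) * theta) <= c).
      { apply Rle_trans with (2 * PI * Rabs (INR (cf_q theta M) * theta - IZR zM)). apply abs1e_le.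
        pose proof (Hcond M (le_n _)). pose proof PI_RGT_0.
        assert (1 <= (4 * INR p) ^ cf_q theta M) by (apply pow_R1_Rle; lra).
        assert (4 * PI / c <= INR (cf_q theta (S M))).
        { apply Rle_trans with (4 * PI / c * (4 * INR p) ^ cf_q theta M); auto.
          rewrite <- (Rmult_1_r (4 * PI / c)) at 1. apply Rmult_le_compat_l; [|lra].
          apply Rlt_le, Rdiv_lt_0_compat; lra. }
        pose proof (HqM (S M)).
        apply Rle_trans with (2 * PI * / INR (cf_q theta (S M))).
        apply Rmult_le_compat_l; lra.
        apply (Rmult_le_reg_r (INR (cf_q theta (S M)))). lra.
        rewrite Rmult_assoc, Rinv_l by lra.
        apply (Rmult_le_compat_l c) in H2; [|lra].
        replace (c * (4 * PI / c)) with (4 * PI) in H2 by (field; lra). lra. }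
      unfold c in *. lra.
Qed.
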